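(* Let $r\ge 6$ and $n\ge 1$ be integers, and let $P$ be a doubly-stochastic $n\times n$ matrix with $P(i,j)\le \frac1r$ for all $i,j$. Then $\mathrm{per}(P)\le(\sqrt2)^n F(P)$.
   Context: A doubly-stochastic matrix is an entrywise non-negative square matrix all of whose row and column sums equal $1$. $\mathrm{per}$ is the permanent. $F(P)=\prod_{1\le i,j\le n}(1-P(i,j))^{1-P(i,j)}$, with $0^0=1$. *)

(* Defs.v *)
From HB Require Import structures.
From mathcomp Require Import all_boot all_order all_algebra all_fingroup.
From mathcomp Require Import reals exp.
Set Implicit Arguments. Unset Strict Implicit. Unset Printing Implicit Defensive.
Import Order.TTheory GRing.Theory Num.Theory.
Local Open Scope ring_scope.

Definition doubly_stochastic (R : realType) (n : nat) (P : 'M[R]_n) : Prop :=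
  (forall i j, 0 <= P i j) /\
  (forall i, \sum_(j < n) P i j = 1) /\
  (forall j, \sum_(i < n) P i j = 1).

Definition per (R : realType) (n : nat) (P : 'M[R]_n) : R :=
  \sum_(s : 'S_n) \prod_(i < n) P i (s i).

(* F(P) = prod_{i,j} (1 - P(i,j))^(1 - P(i,j)), with 0^0 = 1 (powR 0 0 = 1). *)
Definition F (R : realType) (n : nat) (P : 'M[R]_n) : R :=
  \prod_(i < n) \prod_(j < n) powR (1 - P i j) (1 - P i j).

(* Main.v *)
Require Import Defs.
From HB Require Import structures.
From mathcomp Require Import all_boot all_order all_algebra all_fingroup.
From mathcomp Require Import reals exp.
From mathcomp Require Import sequences.
From mathcomp Require Import ring lra.
Import Order.TTheory GRing.Theory Num.Theory.
Local Open Scope ring_scope.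

Set Implicit Arguments. Unset Strict Implicit. Unset Printing Implicit Defensive.
Section S.
Variable R : realType.

Definition pcof n (A : 'M[R]_n) i j :=
  \sum_(s : 'S_n | s i == j) \prod_(k | i != k) A k (s k).

Definition minor n (A : 'M[R]_n.+1) i j : 'M[R]_n :=
  \matrix_(x, y) A (lift i x) (lift j y).

Lemma per_expand n (A : 'M[R]_n) i : per A = \sum_j A i j * pcof A i j.
Proof.
rewrite /per (partition_big (fun s : 'S_n => s i) xpredT) //=.
apply: eq_bigr => j _; rewrite /pcof big_distrr /=.
apply: eq_bigr => s /eqP <-.
by rewrite (bigD1 i) //=; congr (_ * _); apply: eq_bigl => k; rewrite eq_sym.
Qed.

Lemma pcof_minor n (A : 'M[R]_n.+1) i0 j0 : pcof A i0 j0 = per (minor A i0 j0).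
Proof.
rewrite /pcof /per.
rewrite (reindex (lift_perm i0 j0)); last first.
  pose ulsf i (s : 'S_n.+1) k := odflt k (unlift (s i) (s (lift i k))).
  have ulsfK i (s : 'S_n.+1) k: lift (s i) (ulsf i s k) = s (lift i k).
    rewrite /ulsf; have:= neq_lift i k.
    by rewrite -(can_eq (permK s)) => /unlift_some[] ? ? ->.
  have inj_ulsf: injective (ulsf i0 _).
    move=> s; apply: can_inj (ulsf (s i0) s^-1%g) _ => k'.
    by rewrite {1}/ulsf ulsfK !permK liftK.
  exists (fun s => perm (inj_ulsf s)) => [s _ | s].
    by apply/permP=> k'; rewrite permE /ulsf lift_perm_lift lift_perm_id liftK.
  move/(s _ =P _) => si0; apply/permP=> k.
  case: (unliftP i0 k) => [k'|] ->; rewrite ?lift_perm_id //.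
  by rewrite lift_perm_lift -si0 permE ulsfK.
apply: eq_big => [s | s _]; first by rewrite lift_perm_id eqxx.
case: (pickP 'I_n) => [k0 _ | n0]; last first.
  rewrite !big1 // => [i _ | j /unlift_some[i] _ _]; by have:= n0 i.
rewrite (reindex (lift i0)).
  by apply: eq_big => [k | k _] /=; rewrite ?neq_lift // !mxE lift_perm_lift.
exists (fun k => odflt k0 (unlift i0 k)) => k; first by rewrite liftK.
by case/unlift_some=> k' -> ->.
Qed.

Definition cval (r : nat) : R :=
  match r with 0 | 1 => 1 | 2 => 142/100 | 3 => 183/100 | 4 => 223/100
  | 5 => 263/100 | _ => 302/100 end.
Definition Lam r := ln (cval r).

Lemma cval_gt0 r : 0 < cval r.
Proof. by do 6 (case: r => [|r] /=; first lra); lra. Qed.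

Lemma cval_le6 r : cval r <= 302/100.
Proof. by do 6 (case: r => [|r] /=; first lra); lra. Qed.

Lemma ln_le_sub1 (x : R) : 0 < x -> ln x <= x - 1.
Proof.
move=> x0; have := @le_ln1Dx R (x - 1); rewrite addrCA subrr addr0; apply; lra.
Qed.

Lemma Lam_step r : (1 <= r <= 6)%N ->
  ln (r%:R : R) + (r.-1)%:R * Lam r.-1 <= r%:R * Lam r.
Proof.
move=> /andP[r1 r6].
have cp := cval_gt0.
have rp : (0 : R) < r%:R by rewrite ltr0n.
rewrite /Lam !mulr_natl -!lnXn // -lnM ?posrE ?exprn_gt0 //.
rewrite ler_ln ?posrE ?mulr_gt0 ?exprn_gt0 //.
by case: r r1 r6 {rp} => [|[|[|[|[|[|[|r]]]]]]] //= _ _; rewrite ?expr0 ?expr1 //; lra.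
Qed.


Definition zo n (A : 'M[R]_n) := forall i j, A i j = 0 \/ A i j = 1.
Definition nz (x : R) : nat := x != 0.
Definition cnt n (A : 'M[R]_n) i : nat := (\sum_j nz (A i j))%N.

Lemma zoE n (A : 'M[R]_n) i j : zo A -> A i j = (nz (A i j))%:R.
Proof. by move=> z; rewrite /nz; case: (z i j) => ->; rewrite ?eqxx ?oner_eq0. Qed.

Lemma rowsum_cnt n (A : 'M[R]_n) i : zo A -> \sum_j A i j = (cnt A i)%:R.
Proof. by move=> z; rewrite /cnt natr_sum; apply: eq_bigr => j _; rewrite -zoE. Qed.

Lemma sum_lift n (i : 'I_n.+1) (f : 'I_n.+1 -> R) :
  \sum_x f (lift i x) = \sum_k f k - f i.
Proof. by rewrite (bigD1_ord i) //= [f i + _]addrC addrK. Qed.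

Lemma cnt_minor n (A : 'M[R]_n.+1) i k x :
  cnt (minor A i k) x = (cnt A (lift i x) - nz (A (lift i x) k))%N.
Proof.
rewrite /cnt (bigD1_ord k (P := xpredT)) //= addnC addnK.
by apply: eq_bigr => y _; rewrite mxE.
Qed.

Lemma row_cond n (A : 'M[R]_n) i : zo A -> (1 <= cnt A i <= 6)%N ->
  ln (cnt A i)%:R + \sum_k Lam (cnt A i - nz (A i k)) - Lam (cnt A i).-1
  <= n%:R * Lam (cnt A i).
Proof.
move=> z /andP[r1 r6]; set r := cnt A i.
have st := Lam_step (r := r); rewrite r1 r6 /= in st; have {}st := st isT.
have -> : \sum_k Lam (r - nz (A i k)) =
    \sum_k ((nz (A i k))%:R * Lam r.-1 + (1 - (nz (A i k))%:R) * Lam r).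
  apply: eq_bigr => k _; rewrite /nz; case: (A i k != 0) => /=.
  - by rewrite subn1 mul1r subrr mul0r addr0.
  - by rewrite subn0 mul0r subr0 mul1r add0r.
rewrite big_split /= -!mulr_suml sumrB sumr_const card_ord -natr_sum -/(cnt A i) -/r.
have e1 : (r.-1)%:R = r%:R - 1 :> R by rewrite -subn1 natrB.
rewrite e1 mulrBl mul1r in st.
rewrite mulrBl; move: st.
move: (r%:R * Lam r.-1) (n%:R * Lam r) (r%:R * Lam r) (ln r%:R) (Lam r.-1) => a b c d e.
lra.
Qed.

End S.

Section S.
Variable R : realType.

Lemma per0 (A : 'M[R]_0) : per A = 1.
Proof.
rewrite /per (eq_bigr (fun _ => 1)); last by move=> s _; rewrite big_ord0.
by rewrite sumr_const card_Sn.
Qed.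

Lemma pcof_ge0 n (A : 'M[R]_n) i k : (forall i j, 0 <= A i j) -> 0 <= pcof A i k.
Proof. by move=> h; apply: sumr_ge0 => s _; apply: prodr_ge0 => j _. Qed.

Lemma per_ge0 n (A : 'M[R]_n) : (forall i j, 0 <= A i j) -> 0 <= per A.
Proof. by move=> h; apply: sumr_ge0 => s _; apply: prodr_ge0 => j _. Qed.

Lemma ACE n (A : 'M[R]_n) i k :
  A i k * pcof A i k = \sum_(s : 'S_n | s i == k) \prod_j A j (s j).
Proof.
rewrite /pcof big_distrr /=; apply: eq_bigr => s /eqP <-.
by rewrite [RHS](bigD1 i) //=; congr (_ * _); apply: eq_bigl => j; rewrite eq_sym.
Qed.


Lemma bregman n (A : 'M[R]_n) : zo A -> (forall i, (cnt A i <= 6)%N) ->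
  0 < per A -> ln (per A) <= \sum_i Lam R (cnt A i).
Proof.
elim: n A => [|n IH] A z c6 Np.
  by rewrite per0 ln1 big_ord0.
set N := per A.
have Ag0 : forall i j, 0 <= A i j by move=> i j; case: (z i j) => ->.
have Cg0 i k := pcof_ge0 i k Ag0.
have rpos i : (0 < cnt A i)%N.
  rewrite lt0n; apply/negP => /eqP c0.
  have : N = 0.
    rewrite /N (per_expand _ i) big1 // => k _.
    have : nz (A i k) = 0%N.
      by move: c0; rewrite /cnt => /eqP; rewrite sum_nat_eq0 => /forallP/(_ k)/eqP.
    by rewrite /nz; case: eqP => // -> _; rewrite mul0r.
  by move=> N0; move: Np; rewrite -/N N0 ltxx.
have rR i : 0 < (cnt A i)%:R :> R by rewrite ltr0n.
have gibbs i : N * ln N <= N * ln (cnt A i)%:R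
                          + \sum_k A i k * pcof A i k * ln (pcof A i k).
  have rp := rR i; move: rp; set r := (cnt A i)%:R => rp.
  have NE : N = \sum_k A i k * pcof A i k := per_expand A i.
  have rs : \sum_k A i k = r := rowsum_cnt i z.
  have step k : A i k * pcof A i k * ln N <= A i k * pcof A i k * ln (pcof A i k)
     + (A i k * pcof A i k * ln r + (A i k * (N / r) - A i k * pcof A i k)).
    case: (z i k) => ->; first by rewrite !mul0r; lra.
    rewrite !mul1r.
    have [C0|Cp] := eqVneq (pcof A i k) 0.
      rewrite C0 !mul0r; have : 0 < N / r by apply: divr_gt0.
      lra.
    have Cpos : 0 < pcof A i k by rewrite lt0r Cp Cg0.
    have h := @ln_le_sub1 R (N / (pcof A i k * r)) (divr_gt0 Np (mulr_gt0 Cpos rp)).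
    rewrite ln_div ?posrE ?mulr_gt0 // lnM ?posrE // in h.
    have h2 := ler_wpM2l (ltW Cpos) h.
    have e : pcof A i k * (N / (pcof A i k * r) - 1) = N / r - pcof A i k.
      by field; apply/andP; split; [rewrite gt_eqF|].
    rewrite e in h2.
    move: h2; rewrite mulrBr mulrDr.
    move: (pcof A i k * ln N) (pcof A i k * ln (pcof A i k)) (pcof A i k * ln r) => a b c.
    lra.
  have L : N * ln N = \sum_k A i k * pcof A i k * ln N by rewrite {1}NE mulr_suml.
  rewrite L; apply: le_trans (ler_sum _ (fun k _ => step k)) _.
  rewrite big_split /= big_split /= sumrB -!mulr_suml -NE rs.
  have -> : r * (N / r) = N by field; rewrite gt_eqF.
  lra.
pose X i k := \sum_i' Lam R (cnt A i' - nz (A i' k)) - Lam R (cnt A i - nz (A i k)).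
have ihk i k : A i k * pcof A i k * ln (pcof A i k) <= A i k * pcof A i k * X i k.
  have [AC0|ACn] := eqVneq (A i k * pcof A i k) 0; first by rewrite AC0 !mul0r.
  have A1 : A i k = 1.
    by case: (z i k) ACn => // ->; rewrite mul0r eqxx.
  have Cpos : 0 < pcof A i k.
    by rewrite lt0r Cg0 andbT; apply: contraNneq ACn => ->; rewrite mulr0.
  apply: ler_wpM2l; first by rewrite A1 mul1r ltW.
  rewrite pcof_minor in Cpos *.
  have := IH (minor A i k) _ _ Cpos.
  move=> /(_ _ _) /le_trans; apply.
  - by move=> x y; rewrite mxE; apply: z.
  - by move=> x; rewrite cnt_minor; apply: leq_trans (leq_subr _ _) (c6 _).
  rewrite (eq_bigr (fun x => Lam R (cnt A (lift i x) - nz (A (lift i x) k)))); last first.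
    by move=> x _; rewrite cnt_minor.
  by rewrite (sum_lift i (fun i' => Lam R (cnt A i' - nz (A i' k)))).
pose K := \sum_i' (\sum_k Lam R (cnt A i' - nz (A i' k)) - Lam R (cnt A i').-1).
have dc : \sum_i \sum_k A i k * pcof A i k * X i k = N * K.
  have e1 i : \sum_k A i k * pcof A i k * X i k
            = \sum_(s : 'S_n.+1) (\prod_j A j (s j)) * X i (s i).
    rewrite [RHS](partition_big (fun s : 'S_n.+1 => s i) xpredT) //=.
    apply: eq_bigr => k _; rewrite ACE mulr_suml; apply: eq_bigr => s /eqP -> //.
  rewrite (eq_bigr _ (fun i _ => e1 i)) exchange_big /= /N /per mulr_suml.
  apply: eq_bigr => s _; rewrite -big_distrr /=.
  have [w0|wn] := eqVneq (\prod_j A j (s j)) 0; first by rewrite w0 !mul0r.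
  congr (_ * _).
  have as1 j : A j (s j) = 1.
    case: (z j (s j)) => // h; move: wn; rewrite (bigD1 j) //= h mul0r eqxx //.
  rewrite /X sumrB /K sumrB; congr (_ - _).
    rewrite exchange_big /=; apply: eq_bigr => i' _.
    by rewrite [RHS](reindex_inj (@perm_inj _ s)).
  by apply: eq_bigr => i _; rewrite as1 /nz oner_eq0 /= subn1.
have main : (n.+1)%:R * (N * ln N) <= N * \sum_i ((n.+1)%:R * Lam R (cnt A i)).
  have : \sum_(i < n.+1) (N * ln N) <= \sum_i (N * ln (cnt A i)%:R
                       + \sum_k A i k * pcof A i k * X i k).
    apply: ler_sum => i _; apply: le_trans (gibbs i) _; rewrite lerD2l.
    by apply: ler_sum => k _; exact: ihk.
  rewrite sumr_const card_ord big_split /= dc -big_distrr /= -mulrDr => H.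
  apply: le_trans (_ : _ <= N * (\sum_i ln (cnt A i)%:R + K)) _.
    by rewrite mulr_natl.
  apply: ler_wpM2l; first exact: ltW.
  rewrite /K -big_split /=; apply: ler_sum => i _.
  have := row_cond z (i := i); rewrite rpos c6 => /(_ isT).
  by rewrite addrA.
rewrite -big_distrr /= mulrCA in main.
by rewrite ler_pM2l // ler_pM2l // in main.
Qed.

End S.

Section S.
Variable R : realType.

Lemma exists_max n (c : 'I_n.+1 -> R) : exists k0, forall k, c k <= c k0.
Proof.
case: (@arg_maxP _ _ _ ord0 xpredT c isT) => k0 _ h.
by exists k0 => k; exact: h k isT.
Qed.

Lemma greedy (M : R) m n (p c : 'I_n -> R) : 0 < M ->
  (forall k, 0 <= p k <= M) -> (forall k, 0 <= c k) -> \sum_k p k <= m%:R * M ->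
  exists q : 'I_n -> R, (forall k, q k = 0 \/ q k = M) /\ \sum_k q k <= m%:R * M
      /\ \sum_k p k * c k <= \sum_k q k * c k.
Proof.
move=> M0; case: n p c => [|n] p c.
  move=> hp hc hs; exists (fun _ => 0); split; first by left.
  by rewrite !big_ord0; split => //; rewrite mulr_ge0 // ltW.
elim: m p c => [|m IH] p c hp hc hs.
  have p0 k : p k = 0.
    apply: (psumr_eq0P (P := xpredT) (F := p)) => // [i _|]; first by case/andP: (hp i).
    by apply/eqP; rewrite eq_le sumr_ge0 ?andbT; [rewrite mul0r in hs | move=> i _; case/andP: (hp i)].
  exists (fun _ => 0); split; first by left.
  split; first by rewrite big1 // mul0r.
  by rewrite !big1 // => k _; rewrite ?p0 mul0r.
have [k0 k0max] := exists_max c.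
pose S' := \sum_(k | k != k0) p k.
pose d := M - p k0.
have hS : \sum_k p k = p k0 + S' by rewrite (bigD1 k0).
have pk0 := hp k0; have ck0 := hc k0.
have S'0 : 0 <= S' by apply: sumr_ge0 => k _; case/andP: (hp k).
have bnd : \sum_(k | k != k0) p k * c k <= S' * c k0.
  rewrite /S' mulr_suml; apply: ler_sum => k _; apply: ler_wpM2l; first by case/andP: (hp k).
  exact: k0max.
have hpc : \sum_k p k * c k = p k0 * c k0 + \sum_(k | k != k0) p k * c k by rewrite (bigD1 k0).
have [S'le|S'gt] := lerP S' d.
  exists (fun k => if k == k0 then M else 0); split.
    by move=> k; case: (k == k0); [right|left].
  have -> : \sum_k (if k == k0 then M else 0) = M.
    by rewrite (bigD1 k0) //= eqxx big1 ?addr0 // => k /negbTE ->.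
  have -> : \sum_k (if k == k0 then M else 0) * c k = M * c k0.
    by rewrite (bigD1 k0) //= eqxx big1 ?addr0 // => k /negbTE ->; rewrite mul0r.
  have h1 : (1:R) <= m.+1%:R by rewrite ler1n.
  split; first by nra.
  rewrite hpc; apply: le_trans (lerD (lexx _) bnd) _.
  rewrite -mulrDl ler_wpM2r //; rewrite /d in S'le; lra.
have d0 : 0 <= d by rewrite /d subr_ge0; case/andP: pk0.
have S'p : 0 < S' by apply: le_lt_trans S'gt.
pose t := d / S'.
have tS : t * S' = d by rewrite /t divfK // gt_eqF.
have t0 : 0 <= t by rewrite /t divr_ge0 // ltW.
have t1 : t <= 1 by rewrite /t ler_pdivrMr // mul1r ltW.
pose p' k := if k == k0 then 0 else (1 - t) * p k.
pose c' k := if k == k0 then 0 else c k.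
have hp' k : 0 <= p' k <= M.
  rewrite /p'; case: (k == k0); first by rewrite lexx ltW.
  case/andP: (hp k) => a b; apply/andP; split; first by rewrite mulr_ge0 // subr_ge0.
  nra.
have hc' k : 0 <= c' k by rewrite /c'; case: (k == k0).
have sp' : \sum_k p' k = (1 - t) * S'.
  rewrite (bigD1 k0) //= /p' eqxx add0r /S' big_distrr /=.
  by apply: eq_bigr => k /negbTE ->.
have hs' : \sum_k p' k <= m%:R * M.
  rewrite sp' mulrBl mul1r tS /d; rewrite hS -natr1 in hs; lra.
have [q' [hq' [sq' hpq']]] := IH p' c' hp' hc' hs'.
have q'0 k : 0 <= q' k by case: (hq' k) => ->; rewrite ?lexx ?ltW.
exists (fun k => if k == k0 then M else q' k); split.
  by move=> k; case: (k == k0); [right|apply: hq'].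
have sqE : \sum_k (if k == k0 then M else q' k) = M + \sum_(k | k != k0) q' k.
  by rewrite (bigD1 k0) //= eqxx; congr (_ + _); apply: eq_bigr => k /negbTE ->.
have sq'E : \sum_k q' k = q' k0 + \sum_(k | k != k0) q' k by rewrite (bigD1 k0).
split.
  rewrite sqE -natr1; have := q'0 k0; lra.
have sqcE : \sum_k (if k == k0 then M else q' k) * c k
            = M * c k0 + \sum_(k | k != k0) q' k * c k.
  by rewrite (bigD1 k0) //= eqxx; congr (_ + _); apply: eq_bigr => k /negbTE ->.
have sq'cE : \sum_k q' k * c' k = \sum_(k | k != k0) q' k * c k.
  rewrite (bigD1 k0) //= /c' eqxx mulr0 add0r.
  by apply: eq_bigr => k /negbTE ->.
have sp'cE : \sum_k p' k * c' k = (1 - t) * \sum_(k | k != k0) p k * c k.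
  rewrite (bigD1 k0) //= /c' /p' eqxx mul0r add0r big_distrr /=.
  by apply: eq_bigr => k /negbTE ->; rewrite mulrA.
rewrite sqcE hpc; rewrite sq'cE sp'cE in hpq'.
have tb := ler_wpM2l t0 bnd.
rewrite mulrA tS in tb.
move: hpq' tb; rewrite mulrBl mul1r.
move: (\sum_(k | k != k0) p k * c k) (\sum_(k | k != k0) q' k * c k) => W Q.
rewrite /d mulrBl; move: (t * W) (M * c k0) (p k0 * c k0) => a b e.
lra.
Qed.

End S.

Section S.
Variable R : realType.

Lemma reduce n (A : 'M[R]_n) : (forall i j, 0 <= A i j <= 6^-1) ->
  (forall i, \sum_j A i j <= 1) -> per A <= (6^-1)^+n * (302/100)^+n.
Proof.
set M : R := 6^-1.
have M0 : 0 < M by rewrite /M invr_gt0; lra.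
have M6 : 6%:R * M = 1 by rewrite /M divff //; lra.
pose S (A : 'M[R]_n) := [set ij : 'I_n * 'I_n | (A ij.1 ij.2 != 0) && (A ij.1 ij.2 != M)].
suff H : forall k (A : 'M[R]_n), (#|S A| < k)%N -> (forall i j, 0 <= A i j <= M) ->
  (forall i, \sum_j A i j <= 1) -> per A <= M^+n * (302/100)^+n.
  by apply: (H (#|S A|.+1)).
elim=> [//|k IH] {}A hk h1 h2.
have Ag0 i j : 0 <= A i j by case/andP: (h1 i j).
case: (set_0Vmem (S A)) => [S0 | [[i0 j0] hin]].
  pose B := \matrix_(i, j) (6 * A i j).
  have zoB : zo B.
    move=> i j; rewrite mxE.
    have : (i, j) \notin S A by rewrite S0 inE.
    rewrite inE /= negb_and !negbK => /orP[/eqP->|/eqP->]; [left; lra|right; lra].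
  have perE : per A = M^+n * per B.
    rewrite /per big_distrr /=; apply: eq_bigr => s _.
    have -> : M ^+ n = \prod_(i < n) M by rewrite prodr_const card_ord.
    rewrite -big_split /=; apply: eq_bigr => i _.
    rewrite mxE mulrA [M * _]mulrC M6 mul1r //.
  have c6B i : (cnt B i <= 6)%N.
    rewrite -(ler_nat R) -rowsum_cnt //.
    have -> : \sum_j B i j = 6 * \sum_j A i j by rewrite big_distrr; apply: eq_bigr => j _; rewrite mxE.
    have := h2 i; lra.
  have pBle : per B <= (302/100)^+n.
    case: (eqVneq (per B) 0) => [->|nz]; first by apply: exprn_ge0; lra.
    have pB : 0 < per B.
      by rewrite lt0r nz per_ge0 // => i j; case: (zoB i j) => ->.
    have := bregman zoB c6B pB.
    have cp : (0:R) < 302/100 by lra.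
    move=> hb; rewrite -ler_ln ?posrE ?exprn_gt0 //; apply: le_trans hb _.
    rewrite lnXn // -[in X in _ <= _ *+ X](card_ord n) -sumr_const.
    apply: ler_sum => i _; rewrite /Lam ler_ln ?posrE ?cval_gt0 //.
    exact: cval_le6.
  rewrite perE ler_wpM2l // exprn_ge0 // ltW //.
have hAi x : 0 <= A i0 x <= M by apply: h1.
have hC x : 0 <= pcof A i0 x by apply: pcof_ge0.
have hs : \sum_k A i0 k <= 6%:R * M by rewrite M6; apply: h2.
have [q [hq [sq hpq]]] := greedy M0 hAi hC hs.
pose A' := \matrix_(i, j) if i == i0 then q j else A i j.
have pcE j : pcof A' i0 j = pcof A i0 j.
  rewrite /pcof; apply: eq_bigr => s _; apply: eq_bigr => x hx.
  by rewrite mxE eq_sym (negbTE hx).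
have perA' : per A <= per A'.
  rewrite (per_expand A i0) (per_expand A' i0).
  apply: le_trans hpq _; rewrite le_eqVlt; apply/orP; left; apply/eqP/eq_bigr => j _; rewrite pcE mxE eqxx //.
apply: le_trans perA' _; apply: IH.
- have sub : S A' \proper S A.
    apply/properP; split.
      apply/subsetP => -[i j]; rewrite !inE /= !mxE.
      case: (i == i0) => //.
      by case: (hq j) => ->; rewrite ?eqxx ?andbF.
    exists (i0, j0) => //; rewrite inE mxE /= eqxx.
    by case: (hq j0) => ->; rewrite ?eqxx ?andbF.
  by apply: leq_trans (proper_card sub) _.
- move=> i j; rewrite mxE; case: (i == i0); last exact: h1.
  by case: (hq j) => ->; rewrite ?lexx ltW.
- move=> i; case: (eqVneq i i0) => [->|ne].
    under eq_bigr => j _ do rewrite mxE eqxx.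
    by rewrite -M6.
  by under eq_bigr => j _ do rewrite mxE (negbTE ne); apply: h2.
Qed.

End S.

Lemma e_le (R : realType) : expR (1 : R) <= 279/100.
Proof.
have h := @expR_ge1Dx R (- (1/20)).
rewrite expRN in h.
have e0 : 0 < expR (1/20 : R) := expR_gt0 _.
have h2 : expR (1/20 : R) <= 20/19.
  have : (19/20 : R) <= (expR (1/20))^-1 by move: h; rewrite addrC; lra.
  move=> h1; rewrite -[expR _]invrK.
  have -> : (20/19 : R) = (19/20)^-1 by rewrite invf_div.
  by rewrite lef_pV2 ?posrE ?invr_gt0 //; lra.
have -> : (1 : R) = 20%:R * (1/20) by lra.
rewrite expRM_natl; apply: le_trans (lerXn2r _ _ _ h2) _; rewrite ?nnegrE; try lra.
Qed.

Lemma key (R : realType) (p : R) : 0 <= p <= 6^-1 -> expR (- p) <= powR (1 - p) (1 - p).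
Proof.
move=> /andP[p0 p6].
have hp : p < 1 by apply: le_lt_trans p6 _; rewrite invf_lt1; lra.
rewrite /powR ifF; last by apply/negbTE; rewrite subr_eq0 eq_sym lt_eqF.
rewrite ler_expR.
have q0 : 0 < 1 - p by lra.
have q1 : 0 < (1 - p)^-1 by rewrite invr_gt0.
have h := @ln_le_sub1 R (1 - p)^-1 q1.
rewrite lnV ?posrE // in h.
have h2 := ler_wpM2l (ltW q0) h.
rewrite mulrBr mulrV ?unitfE ?gt_eqF // mulr1 mulrN in h2.
lra.
Qed.

Unset Implicit Arguments. Set Strict Implicit.

Theorem mainTheorem10 (R : realType) (r n : nat) (P : 'M[R]_n) :
  (6 <= r)%N -> (1 <= n)%N ->
  doubly_stochastic P ->
  (forall i j, P i j <= r%:R^-1) ->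
  per P <= (Num.sqrt (2 : R)) ^+ n * F P.
Proof.
move=> r6 n1 [P0 [Prow Pcol]] Pr.
have PM i j : 0 <= P i j <= 6^-1.
  rewrite P0 /=; apply: le_trans (Pr i j) _.
  rewrite lef_pV2 ?posrE ?ltr0n ?(leq_trans _ r6) //; first by rewrite ler_nat.
have hper := reduce PM (fun i => (ltac:(by rewrite Prow) : \sum_j P i j <= 1)).
have hF : expR (-1) ^+ n <= F P.
  have -> : expR (-1) ^+ n = \prod_(i < n) \prod_(j < n) expR (- P i j) :> R.
    rewrite -[in LHS](card_ord n) -prodr_const; apply: eq_bigr => i _.
    by rewrite -expR_sum sumrN Prow.
  apply: ler_prod => i _; rewrite prodr_ge0 /=; last by move=> j _; exact: expR_ge0.
  apply: ler_prod => j _; rewrite expR_ge0 /=; exact: key.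
have s2 : 1414/1000 <= Num.sqrt (2 : R).
  have -> : (1414/1000 : R) = Num.sqrt ((1414/1000)^+2) by rewrite sqrtr_sqr ger0_norm //; lra.
  rewrite ler_sqrt; lra.
have eb : 100/279 <= expR (-1 : R).
  rewrite expRN; have := e_le R; have := expR_gt0 (1 : R) => e0 e1.
  have -> : (100/279 : R) = (279/100)^-1 by rewrite invf_div.
  by rewrite lef_pV2 ?posrE //; lra.
apply: le_trans hper _.
rewrite -exprMn; apply: le_trans (_ : (Num.sqrt 2 * expR (-1)) ^+ n <= _).
  apply: lerXn2r; rewrite ?nnegrE ?mulr_ge0 ?invr_ge0 ?sqrtr_ge0 ?expR_ge0 //; try lra.
  have : 1414/1000 * (100/279) <= Num.sqrt (2:R) * expR (-1).
    by apply: ler_pM => //; lra.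
  lra.
rewrite exprMn; apply: ler_wpM2l; last exact: hF.
by rewrite exprn_ge0 // sqrtr_ge0.
Qed.
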